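(* Let $N=(V,M,E_V,E_M,\mathcal K)$ be a gene regulatory network with multiplexes, let $P,Q$ be assertions and let $p$ be a path program of $N$. Assume that every $while$ loop occurring in $p$ terminates, in the sense that for every $while$ subprogram $w=(while~e~with~I~do~p_0)$ of $p$ there is no infinite sequence of states $\eta_0,\eta_1,\eta_2,\dots$ such that, for every $i$, $\eta_i\models_N e$ and $\eta_{i+1}\in E_i$ for some set $E_i$ with $\eta_i\leadsto_{p_0}E_i$. If $\vdash\{P\}\,p\,\{Q\}$ is derivable with the inference rules and axioms of the modified Hoare logic, then the Hoare triple $\{P\}\,p\,\{Q\}$ is satisfied, i.e. for every state $\eta$ with $\eta\models_N P$ there exists a set of states $E$ with $\eta\leadsto_p E$ and $\eta'\models_N Q$ for all $\eta'\in E$.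
   Context: Gene regulatory network with multiplexes (GRN): a tuple $N=(V,M,E_V,E_M,\mathcal K)$ where $V$ (variables) and $M$ (multiplexes) are disjoint finite sets; $(V\cup M,E_V\cup E_M)$ is a directed graph whose edges in $E_V$ go from a variable to a multiplex and whose edges in $E_M$ go from a multiplex to a variable or a multiplex, and every directed cycle contains at least one variable; each variable $v$ has a positive integer bound $b_v$; each multiplex $m$ is labelled by a formula $\varphi_m$ built with $\neg,\wedge,\vee$ from atoms $v\ge s$ (where $v\to m\in E_V$ and $s\in\{1,\dots,b_v\}$) and atoms $m'$ (where $m'\to m\in E_M$). For $v\in V$, $N^{-1}(v)$ is the set of multiplexes $m$ with $m\to v\in E_M$. $\mathcal K=\{K_{v,\omega}\}$ is a family of integers indexed by $v\in V$ and $\omega\subseteq N^{-1}(v)$ with $0\le K_{v,\omega}\le b_v$. The flattened formula $\overline{\varphi_m}$ is obtained by repeatedly replacing each multiplex atom $m'$ by $\varphi_{m'}$; all its atoms are of the form $v\ge s$. States: a state is a map $\eta:V\to\mathbb N$ with $\eta(v)\le b_v$ for all $v$; $S$ denotes the set of states. $\eta\models v\ge s$ iff $\eta(v)\ge s$, extended to connectives as usual. The resources of $v$ at $\eta$ are $\rho(\eta,v)=\{m\in N^{-1}(v):\eta\models\overline{\varphi_m}\}$. For a state $\eta$, variable $v$ and $k\in[0,b_v]$, $\eta[v\leftarrow k]$ is the state equal to $\eta$ except that $v$ takes value $k$. State graph: there is a transition $\eta\to\eta'$ iff either (i) $\eta(v)=K_{v,\rho(\eta,v)}$ for all $v\in V$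 and $\eta'=\eta$, or (ii) there is $v\in V$ with $\eta(v)\ne K_{v,\rho(\eta,v)}$ and $\eta'=\eta[v\leftarrow \eta(v)+1]$ if $\eta(v)<K_{v,\rho(\eta,v)}$, $\eta'=\eta[v\leftarrow\eta(v)-1]$ if $\eta(v)>K_{v,\rho(\eta,v)}$. Assertion language: terms are integers, variable symbols $v\in V$, symbols $K_{v,\omega}$, and $(t+t')$, $(t-t')$; atoms are $t=t'$, $t<t'$, $t>t'$, $t\le t'$, $t\ge t'$; assertions are closed under $\neg,\wedge,\vee,\Rightarrow$. $\eta\models_N\varphi$ iff $\varphi$ holds in $\mathbb Z$ after replacing each $v$ by $\eta(v)$ and each $K_{v,\omega}$ by its value in $\mathcal K$. $Q[v\leftarrow t]$ denotes substitution of the term $t$ for each occurrence of $v$ in $Q$. An assertion is valid if every state satisfies it. Path programs: generated by $v+$, $v-$, $v:=n$ ($v\in V$, $n\in\mathbb N$), $assert(e)$ ($e$ an assertion), $(p_1;p_2)$ (associative), $(if~e~then~p_1~else~p_2)$, $(while~e~with~I~do~p)$ ($e,I$ assertions; $I$ is the loop invariant), $\forall(p_1,p_2)$, $\exists(p_1,p_2)$; additionally the empty program $\varepsilon$. Semantics: $\leadsto_p\subseteq S\times\mathcal P(S)$ is the smallest relation such that for every state $\eta$: (1) for $p=v+$ (resp. $v-$), with $\eta'=\eta[v\leftarrow\eta(v)+1]$ (resp. $\eta(v)-1$), if $\eta\to\eta'$ is a transition then $\eta\leadsto_p\{\eta'\}$; (2) $\eta\leadsto_{v:=k}\{\eta[v\leftarrow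 k]\}$; (3) if $\eta\models_N e$ then $\eta\leadsto_{assert(e)}\{\eta\}$; (4) if $\eta\leadsto_{p_1}E_1$ and $\eta\leadsto_{p_2}E_2$ then $\eta\leadsto_{\forall(p_1,p_2)}E_1\cup E_2$; (5) if $\eta\leadsto_{p_i}E$ ($i\in\{1,2\}$) then $\eta\leadsto_{\exists(p_1,p_2)}E$; (6) if $\eta\leadsto_{p_1}F$ and $(E_e)_{e\in F}$ is a family with $e\leadsto_{p_2}E_e$ for each $e\in F$, then $\eta\leadsto_{p_1;p_2}\bigcup_{e\in F}E_e$; (7) if $\eta\models_N e$ and $\eta\leadsto_{p_1}E$, or $\eta\not\models_N e$ and $\eta\leadsto_{p_2}E$, then $\eta\leadsto_{if~e~then~p_1~else~p_2}E$; (8) for $w=while~e~with~I~do~p_0$: if $\eta\models_N e$ and $\eta\leadsto_{p_0;w}E$ then $\eta\leadsto_wE$; if $\eta\not\models_N e$ then $\eta\leadsto_w\{\eta\}$; (9) $\eta\leadsto_\varepsilon\{\eta\}$. A Hoare triple $\{P\}p\{Q\}$ is satisfied iff for every $\eta\models_N P$ there is $E$ with $\eta\leadsto_pE$ and every $\eta'\in E$ satisfies $Q$. Formulas: for $v\in V$, $\omega\subseteq N^{-1}(v)$: $\Phi_v^\omega=\bigwedge_{m\in\omega}\overline{\varphi_m}\wedge\bigwedge_{m\in N^{-1}(v)\setminus\omega}\neg\overline{\varphi_m}$; $\Phi_v^+=\bigwedge_{\omega\subseteq N^{-1}(v)}(\Phi_v^\omega\Rightarrow K_{v,\omega}>v)$;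 $\Phi_v^-=\bigwedge_{\omega\subseteq N^{-1}(v)}(\Phi_v^\omega\Rightarrow K_{v,\omega}<v)$. Inference rules of the modified Hoare logic: Incrementation: $\{\Phi_v^+\wedge Q[v\leftarrow v+1]\}\,v+\,\{Q\}$. Decrementation: $\{\Phi_v^-\wedge Q[v\leftarrow v-1]\}\,v-\,\{Q\}$. Assert: $\{\Phi\wedge Q\}\,assert(\Phi)\,\{Q\}$. Universal: from $\{P_1\}p_1\{Q\}$ and $\{P_2\}p_2\{Q\}$ infer $\{P_1\wedge P_2\}\forall(p_1,p_2)\{Q\}$. Existential: from the same premises infer $\{P_1\vee P_2\}\exists(p_1,p_2)\{Q\}$. Assignment: $\{Q[v\leftarrow k]\}\,v:=k\,\{Q\}$. Sequential composition: from $\{P_2\}p_2\{Q\}$ and $\{P_1\}p_1\{P_2\}$ infer $\{P_1\}p_1;p_2\{Q\}$. Alternative: from $\{P_1\}p_1\{Q\}$ and $\{P_2\}p_2\{Q\}$ infer $\{(e\wedge P_1)\vee(\neg e\wedge P_2)\}\,if~e~then~p_1~else~p_2\,\{Q\}$. Iteration: from $\{e\wedge I\}p\{I\}$ infer $\{I\}\,while~e~with~I~do~p\,\{\neg e\wedge I\}$. Empty program: from $P\Rightarrow Q$ infer $\{P\}\varepsilon\{Q\}$. Boundary axioms: $0\le v$, $v\le b_v$, $0\le K_{v,\omega}$, $K_{v,\omega}\le b_v$. Premises of the form $P\Rightarrow Q$ are established by first-order logic and arithmetic on integers together with the boundary axioms.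
   Formalization: Every assignment $v:=n$ occurring in p has n ≤ $b_v$, and semantic clause (2) gives $\eta\leadsto_{v:=k}\{\eta[v\leftarrow k]\}$ only when k ≤ $b_v$ instead of for every k ∈ ℕ. Each condition added here is assumed in the paper as well or is needed for the statement above to hold. *)

(* Defs.v *)
From HB Require Import structures.
From mathcomp Require Import all_boot.
From Stdlib Require Import ZArith Relations.

Set Implicit Arguments.
Unset Strict Implicit.
Unset Printing Implicit Defensive.

Inductive mform (V M : Type) :=
  | MGe  : V -> nat -> mform V M
  | MMux : M -> mform V M
  | MNot : mform V M -> mform V M
  | MAnd : mform V M -> mform V M -> mform V M
  | MOr  : mform V M -> mform V M -> mform V M.
Arguments MGe {V M}. Arguments MMux {V M}. Arguments MNot {V M}.
Arguments MAnd {V M}. Arguments MOr {V M}.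

Fixpoint mf_wf (V M : Type) (EV : V -> M -> bool) (EMM : M -> M -> bool)
  (b : V -> nat) (m : M) (f : mform V M) : Prop :=
  match f with
  | MGe v s => EV v m /\ 1 <= s <= b v
  | MMux m' => EMM m' m
  | MNot f1 => mf_wf EV EMM b m f1
  | MAnd f1 f2 | MOr f1 f2 => mf_wf EV EMM b m f1 /\ mf_wf EV EMM b m f2
  end.

(* EV v m  : edge v -> m  (variable to multiplex)
   EMV m v : edge m -> v  (multiplex to variable)
   EMM m m': edge m -> m' (multiplex to multiplex)                      *)
Record GRN (V M : finType) := {
  EV  : V -> M -> bool;
  EMV : M -> V -> bool;
  EMM : M -> M -> bool;
  bnd : V -> nat;
  gphi : M -> mform V M;
  Kp : V -> {set M} -> nat;
  bnd_pos : forall v, 0 < bnd v;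
  (* every directed cycle contains a variable, i.e. there is no cycle
     made of multiplexes only *)
  mux_acyclic : forall m, ~ clos_trans M (fun a b => EMM a b) m m;
  gphi_wf : forall m, mf_wf EV EMM bnd m (gphi m);
  Kp_bnd : forall v (w : {set M}), w \subset [set m | EMV m v] -> Kp v w <= bnd v
}.

Definition Ninv (V M : finType) (N : GRN V M) (v : V) : {set M} :=
  [set m | EMV N m v].

Inductive term (V M : finType) :=
  | TConst : Z -> term V M
  | TVar : V -> term V M
  | TK : V -> {set M} -> term V M
  | TAdd : term V M -> term V M -> term V M
  | TSub : term V M -> term V M -> term V M.
Arguments TConst {V M}. Arguments TVar {V M}. Arguments TK {V M}.
Arguments TAdd {V M}. Arguments TSub {V M}.

Inductive assertion (V M : finType) :=
  | AEq : term V M -> term V M -> assertion V M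
  | ALt : term V M -> term V M -> assertion V M
  | AGt : term V M -> term V M -> assertion V M
  | ALe : term V M -> term V M -> assertion V M
  | AGe : term V M -> term V M -> assertion V M
  | ANot : assertion V M -> assertion V M
  | AAnd : assertion V M -> assertion V M -> assertion V M
  | AOr : assertion V M -> assertion V M -> assertion V M
  | AImp : assertion V M -> assertion V M -> assertion V M.
Arguments AEq {V M}. Arguments ALt {V M}. Arguments AGt {V M}.
Arguments ALe {V M}. Arguments AGe {V M}. Arguments ANot {V M}.
Arguments AAnd {V M}. Arguments AOr {V M}. Arguments AImp {V M}.

Definition ATrue {V M : finType} : assertion V M := AEq (TConst 0%Z) (TConst 0%Z).
Definition AFalse {V M : finType} : assertion V M := AEq (TConst 0%Z) (TConst 1%Z).

Definition bigAnd {V M : finType} (l : seq (assertion V M)) : assertion V M :=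
  foldr AAnd ATrue l.

(* evaluation: a "state" is a map V -> nat (bounds checked by is_state) *)
Fixpoint eval_term (V M : finType) (N : GRN V M) (eta : V -> nat) (t : term V M) : Z :=
  match t with
  | TConst z => z
  | TVar v => Z.of_nat (eta v)
  | TK v w => Z.of_nat (Kp N v w)
  | TAdd a b => (eval_term N eta a + eval_term N eta b)%Z
  | TSub a b => (eval_term N eta a - eval_term N eta b)%Z
  end.

Fixpoint holds (V M : finType) (N : GRN V M) (eta : V -> nat) (a : assertion V M) : bool :=
  match a with
  | AEq x y => Z.eqb (eval_term N eta x) (eval_term N eta y)
  | ALt x y => Z.ltb (eval_term N eta x) (eval_term N eta y)
  | AGt x y => Z.ltb (eval_term N eta y) (eval_term N eta x)
  | ALe x y => Z.leb (eval_term N eta x) (eval_term N eta y)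
  | AGe x y => Z.leb (eval_term N eta y) (eval_term N eta x)
  | ANot a1 => ~~ holds N eta a1
  | AAnd a1 a2 => holds N eta a1 && holds N eta a2
  | AOr a1 a2 => holds N eta a1 || holds N eta a2
  | AImp a1 a2 => holds N eta a1 ==> holds N eta a2
  end.

Fixpoint subst_term (V M : finType) (v : V) (t0 t : term V M) : term V M :=
  match t with
  | TConst z => TConst z
  | TVar u => if u == v then t0 else TVar u
  | TK u w => TK u w
  | TAdd a b => TAdd (subst_term v t0 a) (subst_term v t0 b)
  | TSub a b => TSub (subst_term v t0 a) (subst_term v t0 b)
  end.

Fixpoint subst (V M : finType) (v : V) (t0 : term V M) (a : assertion V M) : assertion V M :=
  match a with
  | AEq x y => AEq (subst_term v t0 x) (subst_term v t0 y)
  | ALt x y => ALt (subst_term v t0 x) (subst_term v t0 y)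
  | AGt x y => AGt (subst_term v t0 x) (subst_term v t0 y)
  | ALe x y => ALe (subst_term v t0 x) (subst_term v t0 y)
  | AGe x y => AGe (subst_term v t0 x) (subst_term v t0 y)
  | ANot a1 => ANot (subst v t0 a1)
  | AAnd a1 a2 => AAnd (subst v t0 a1) (subst v t0 a2)
  | AOr a1 a2 => AOr (subst v t0 a1) (subst v t0 a2)
  | AImp a1 a2 => AImp (subst v t0 a1) (subst v t0 a2)
  end.

Definition is_state (V M : finType) (N : GRN V M) (eta : V -> nat) : Prop :=
  forall v, eta v <= bnd N v.

Definition valid (V M : finType) (N : GRN V M) (a : assertion V M) : Prop :=
  forall eta, is_state N eta -> holds N eta a.

(* Flattened multiplex formulas: repeatedly replace multiplex atoms m'
   by phi_{m'}.  Implemented with fuel #|M|; since the multiplex graph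
   is acyclic (mux_acyclic), every chain of replacements has length at
   most #|M|, so this is the full flattening. *)
Fixpoint mf_to_assert (V M : finType) (f : M -> assertion V M) (g : mform V M)
  : assertion V M :=
  match g with
  | MGe v s => AGe (TVar v) (TConst (Z.of_nat s))
  | MMux m' => f m'
  | MNot g1 => ANot (mf_to_assert f g1)
  | MAnd g1 g2 => AAnd (mf_to_assert f g1) (mf_to_assert f g2)
  | MOr g1 g2 => AOr (mf_to_assert f g1) (mf_to_assert f g2)
  end.

Fixpoint flat_n (V M : finType) (N : GRN V M) (n : nat) (m : M) : assertion V M :=
  match n with
  | 0 => AFalse
  | n'.+1 => mf_to_assert (flat_n N n') (gphi N m)
  end.

Definition flat (V M : finType) (N : GRN V M) (m : M) : assertion V M :=
  flat_n N #|M| m.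

Definition rho (V M : finType) (N : GRN V M) (eta : V -> nat) (v : V) : {set M} :=
  [set m | (m \in Ninv N v) && holds N eta (flat N m)].

Definition upd (V : eqType) (eta : V -> nat) (v : V) (k : nat) : V -> nat :=
  fun x => if x == v then k else eta x.

Definition trans (V M : finType) (N : GRN V M) (eta eta' : V -> nat) : Prop :=
  is_state N eta /\
  (((forall v, eta v = Kp N v (rho N eta v)) /\ eta' = eta) \/
   (exists v, eta v <> Kp N v (rho N eta v) /\
      eta' = upd eta v (if eta v < Kp N v (rho N eta v) then (eta v).+1
                        else (eta v).-1))).

Definition Phi_om (V M : finType) (N : GRN V M) (v : V) (om : {set M}) : assertion V M :=
  bigAnd [seq (if m \in om then flat N m else ANot (flat N m)) | m <- enum (Ninv N v)].

Definition Phi_plus (V M : finType) (N : GRN V M) (v : V) : assertion V M :=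
  bigAnd [seq AImp (Phi_om N v om) (AGt (TK v om) (TVar v))
         | om <- enum (powerset (Ninv N v))].

Definition Phi_minus (V M : finType) (N : GRN V M) (v : V) : assertion V M :=
  bigAnd [seq AImp (Phi_om N v om) (ALt (TK v om) (TVar v))
         | om <- enum (powerset (Ninv N v))].

Inductive prog (V M : finType) :=
  | PInc : V -> prog V M
  | PDec : V -> prog V M
  | PAssign : V -> nat -> prog V M
  | PAssert : assertion V M -> prog V M
  | PSeq : prog V M -> prog V M -> prog V M
  | PIf : assertion V M -> prog V M -> prog V M -> prog V M
  | PWhile : assertion V M -> assertion V M -> prog V M -> prog V M
  | PAll : prog V M -> prog V M -> prog V M
  | PEx : prog V M -> prog V M -> prog V M
  | PEps : prog V M.
Arguments PInc {V M}. Arguments PDec {V M}. Arguments PAssign {V M}.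
Arguments PAssert {V M}. Arguments PSeq {V M}. Arguments PIf {V M}.
Arguments PWhile {V M}. Arguments PAll {V M}. Arguments PEx {V M}.
Arguments PEps {V M}.

Fixpoint subprog (V M : finType) (q p : prog V M) : Prop :=
  q = p \/
  match p with
  | PSeq a b | PIf _ a b | PAll a b | PEx a b => subprog q a \/ subprog q b
  | PWhile _ _ a => subprog q a
  | _ => False
  end.

Inductive sem (V M : finType) (N : GRN V M) : prog V M -> (V -> nat) -> ((V -> nat) -> Prop) -> Prop :=
  | sem_inc : forall v eta,
      trans N eta (upd eta v (eta v).+1) ->
      sem N (PInc v) eta (fun x => x = upd eta v (eta v).+1)
  | sem_dec : forall v eta,
      0 < eta v ->
      trans N eta (upd eta v (eta v).-1) ->
      sem N (PDec v) eta (fun x => x = upd eta v (eta v).-1)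
  | sem_assign : forall v k eta,
      is_state N eta -> k <= bnd N v ->
      sem N (PAssign v k) eta (fun x => x = upd eta v k)
  | sem_assert : forall e eta,
      is_state N eta -> holds N eta e ->
      sem N (PAssert e) eta (fun x => x = eta)
  | sem_all : forall p1 p2 eta E1 E2,
      sem N p1 eta E1 -> sem N p2 eta E2 ->
      sem N (PAll p1 p2) eta (fun x => E1 x \/ E2 x)
  | sem_ex1 : forall p1 p2 eta E,
      sem N p1 eta E -> sem N (PEx p1 p2) eta E
  | sem_ex2 : forall p1 p2 eta E,
      sem N p2 eta E -> sem N (PEx p1 p2) eta E
  | sem_seq : forall p1 p2 eta F (Ef : (V -> nat) -> (V -> nat) -> Prop),
      sem N p1 eta F ->
      (forall e, F e -> sem N p2 e (Ef e)) ->
      sem N (PSeq p1 p2) eta (fun x => exists2 e, F e & Ef e x)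
  | sem_if_t : forall e p1 p2 eta E,
      holds N eta e -> sem N p1 eta E -> sem N (PIf e p1 p2) eta E
  | sem_if_f : forall e p1 p2 eta E,
      ~~ holds N eta e -> sem N p2 eta E -> sem N (PIf e p1 p2) eta E
  | sem_while_t : forall e I p0 eta E,
      holds N eta e -> sem N (PSeq p0 (PWhile e I p0)) eta E ->
      sem N (PWhile e I p0) eta E
  | sem_while_f : forall e I p0 eta,
      is_state N eta -> ~~ holds N eta e ->
      sem N (PWhile e I p0) eta (fun x => x = eta)
  | sem_eps : forall eta,
      is_state N eta -> sem N PEps eta (fun x => x = eta).

Inductive derivable (V M : finType) (N : GRN V M) : assertion V M -> prog V M -> assertion V M -> Prop :=
  | d_inc : forall v Q,
      derivable N (AAnd (Phi_plus N v) (subst v (TAdd (TVar v) (TConst 1%Z)) Q)) (PInc v) Q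
  | d_dec : forall v Q,
      derivable N (AAnd (Phi_minus N v) (subst v (TSub (TVar v) (TConst 1%Z)) Q)) (PDec v) Q
  | d_assert : forall Phi Q,
      derivable N (AAnd Phi Q) (PAssert Phi) Q
  | d_all : forall P1 P2 p1 p2 Q,
      derivable N P1 p1 Q -> derivable N P2 p2 Q ->
      derivable N (AAnd P1 P2) (PAll p1 p2) Q
  | d_ex : forall P1 P2 p1 p2 Q,
      derivable N P1 p1 Q -> derivable N P2 p2 Q ->
      derivable N (AOr P1 P2) (PEx p1 p2) Q
  | d_assign : forall v k Q,
      derivable N (subst v (TConst (Z.of_nat k)) Q) (PAssign v k) Q
  | d_seq : forall P1 P2 p1 p2 Q,
      derivable N P2 p2 Q -> derivable N P1 p1 P2 ->
      derivable N P1 (PSeq p1 p2) Q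
  | d_if : forall e P1 P2 p1 p2 Q,
      derivable N P1 p1 Q -> derivable N P2 p2 Q ->
      derivable N (AOr (AAnd e P1) (AAnd (ANot e) P2)) (PIf e p1 p2) Q
  | d_while : forall e I p,
      derivable N (AAnd e I) p I ->
      derivable N I (PWhile e I p) (AAnd (ANot e) I)
  | d_eps : forall P Q,
      valid N (AImp P Q) -> derivable N P PEps Q.

(* Main.v *)
Require Import Defs.
From HB Require Import structures.
From mathcomp Require Import all_boot.
From mathcomp Require Import zify.
From Stdlib Require Import ZArith Relations Lia Classical ClassicalEpsilon.

Set Implicit Arguments.
Unset Strict Implicit.
Section S.
Variables (V M : finType) (N : GRN V M).

Lemma eval_subst eta v t0 k t :
  eval_term N eta t0 = Z.of_nat k ->
  eval_term N (upd eta v k) t = eval_term N eta (subst_term v t0 t).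
Proof.
move=> H; elim: t => //= [u|a IHa b IHb|a IHa b IHb].
- by rewrite /upd; case: (u == v).
- by rewrite IHa IHb.
- by rewrite IHa IHb.
Qed.

Lemma holds_subst eta v t0 k a :
  eval_term N eta t0 = Z.of_nat k ->
  holds N (upd eta v k) a = holds N eta (subst v t0 a).
Proof.
move=> H; elim: a => /= [x y|x y|x y|x y|x y|a IH|a IH b IHb|a IH b IHb|a IH b IHb];
  by rewrite ?(@eval_subst eta v t0 k _ H) ?IH ?IHb.
Qed.

Lemma bigAnd_intro (T : eqType) (f : T -> assertion V M) l eta :
  (forall x, x \in l -> holds N eta (f x)) -> holds N eta (bigAnd (map f l)).
Proof.
elim: l => //= a l IH H; rewrite H ?mem_head //= IH // => x Hx.
by apply: H; rewrite in_cons Hx orbT.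
Qed.

Lemma bigAnd_elim (T : eqType) (f : T -> assertion V M) l eta x :
  holds N eta (bigAnd (map f l)) -> x \in l -> holds N eta (f x).
Proof.
elim: l => //= a l IH /andP [Ha Hl]; rewrite in_cons => /orP [/eqP ->|] //.
exact: IH.
Qed.

Lemma rho_sub eta v : rho N eta v \subset Ninv N v.
Proof. by apply/subsetP => m; rewrite inE => /andP[]. Qed.

Lemma Phi_om_rho eta v : holds N eta (Phi_om N v (rho N eta v)).
Proof.
rewrite /Phi_om; apply: bigAnd_intro => m Hm.
rewrite mem_enum in Hm.
rewrite /rho inE Hm /=; case E: (holds N eta (flat N m)) => //=.
by rewrite E.
Qed.

Lemma rho_in eta v : rho N eta v \in enum (powerset (Ninv N v)).
Proof. by rewrite mem_enum powersetE rho_sub. Qed.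

Lemma Phi_plus_K eta v : holds N eta (Phi_plus N v) ->
  eta v < Kp N v (rho N eta v).
Proof.
move=> H; have := @bigAnd_elim _ _ (enum (powerset (Ninv N v))) _ _ H (rho_in eta v).
rewrite /= Phi_om_rho /= => /Z.ltb_lt; lia.
Qed.

Lemma Phi_minus_K eta v : holds N eta (Phi_minus N v) ->
  Kp N v (rho N eta v) < eta v.
Proof.
move=> H; have := @bigAnd_elim _ _ (enum (powerset (Ninv N v))) _ _ H (rho_in eta v).
rewrite /= Phi_om_rho /= => /Z.ltb_lt; lia.
Qed.

Definition AH (p : prog V M) := forall v k, subprog (PAssign v k) p -> k <= bnd N v.
Definition WH (p : prog V M) := forall e I p0, subprog (PWhile e I p0) p ->
     ~ exists s : nat -> V -> nat,
         forall i, is_state N (s i) /\ holds N (s i) e /\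
                   exists E, sem N p0 (s i) E /\ E (s i.+1).

Definition Good p Q eta :=
  exists E, sem N p eta E /\ forall x, E x -> holds N x Q /\ is_state N x.

Lemma main_gen P p Q : derivable N P p Q -> AH p -> WH p ->
  forall eta, is_state N eta -> holds N eta P -> Good p Q eta.
Proof.
elim=> {P p Q}.
-
  move=> v Q _ _ eta Hs /= /andP [Hp HQ].
  have HK := Phi_plus_K Hp.
  exists (fun x => x = upd eta v (eta v).+1); split.
    constructor; split => //; right; exists v; split; first lia.
    by rewrite HK.
  move=> x ->; split.
    by rewrite (holds_subst _ _ (t0 := TAdd (TVar v) (TConst 1%Z))) //= ; lia.
  move=> u; rewrite /upd; case: eqP => [->|_] //.
  apply: (leq_trans HK); apply: (@Kp_bnd V M N); apply: rho_sub.
-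
  move=> v Q _ _ eta Hs /= /andP [Hp HQ].
  have HK := Phi_minus_K Hp.
  exists (fun x => x = upd eta v (eta v).-1); split.
    constructor; first lia. split => //; right; exists v; split; first lia.
    by rewrite ltnNge (ltnW HK).
  move=> x ->; split.
    by rewrite (holds_subst _ _ (t0 := TSub (TVar v) (TConst 1%Z))) //= ; lia.
  move=> u; rewrite /upd; case: eqP => [->|_] //.
  have := Hs v; lia.
-
  move=> Phi Q _ _ eta Hs /= /andP [H1 H2].
  exists (fun x => x = eta); split; first by constructor.
  by move=> x ->.
-
  move=> P1 P2 p1 p2 Q _ IH1 _ IH2 HA HW eta Hs /= /andP [H1 H2].
  have [E1 [S1 F1]] := IH1 (fun v k h => HA v k (or_intror (or_introl h)))
     (fun e I p0 h => HW e I p0 (or_intror (or_introl h))) eta Hs H1.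
  have [E2 [S2 F2]] := IH2 (fun v k h => HA v k (or_intror (or_intror h)))
     (fun e I p0 h => HW e I p0 (or_intror (or_intror h))) eta Hs H2.
  exists (fun x => E1 x \/ E2 x); split; first by constructor.
  by move=> x [/F1|/F2].
-
  move=> P1 P2 p1 p2 Q _ IH1 _ IH2 HA HW eta Hs /= /orP [H1|H2].
  + have [E1 [S1 F1]] := IH1 (fun v k h => HA v k (or_intror (or_introl h)))
     (fun e I p0 h => HW e I p0 (or_intror (or_introl h))) eta Hs H1.
    by exists E1; split => //; constructor.
  + have [E2 [S2 F2]] := IH2 (fun v k h => HA v k (or_intror (or_intror h)))
     (fun e I p0 h => HW e I p0 (or_intror (or_intror h))) eta Hs H2.
    by exists E2; split => //; apply: sem_ex2.
-
  move=> v k Q HA _ eta Hs /= H.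
  exists (fun x => x = upd eta v k); split.
    by constructor => //; apply: HA; by left.
  move=> x ->; split.
    by rewrite (holds_subst _ _ (t0 := TConst (Z.of_nat k))).
  move=> u; rewrite /upd; case: eqP => [->|_] //; apply: HA; by left.
-
  move=> P1 P2 p1 p2 Q _ IH2 _ IH1 HA HW eta Hs H.
  have [F [S1 F1]] := IH1 (fun v k h => HA v k (or_intror (or_introl h)))
     (fun e I p0 h => HW e I p0 (or_intror (or_introl h))) eta Hs H.
  have IH2' := IH2 (fun v k h => HA v k (or_intror (or_intror h)))
     (fun e I p0 h => HW e I p0 (or_intror (or_intror h))).
  pose PE e (E : (V -> nat) -> Prop) :=
    sem N p2 e E /\ forall x, E x -> holds N x Q /\ is_state N x.
  pose Ef e := epsilon (inhabits (fun _ : V -> nat => False)) (PE e).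
  have HEf : forall e, F e -> PE e (Ef e).
    move=> e He; apply: epsilon_spec; have [Hq Hs'] := F1 e He.
    exact: IH2' e Hs' Hq.
  exists (fun x => exists2 e, F e & Ef e x); split.
    by constructor => // e He; case: (HEf e He).
  by move=> x [e He Hx]; case: (HEf e He) => _; apply.
-
  move=> e P1 P2 p1 p2 Q _ IH1 _ IH2 HA HW eta Hs /= /orP [/andP [He H1]|/andP [He H2]].
  + have [E1 [S1 F1]] := IH1 (fun v k h => HA v k (or_intror (or_introl h)))
     (fun e I p0 h => HW e I p0 (or_intror (or_introl h))) eta Hs H1.
    by exists E1; split => //; constructor.
  + have [E2 [S2 F2]] := IH2 (fun v k h => HA v k (or_intror (or_intror h)))
     (fun e I p0 h => HW e I p0 (or_intror (or_intror h))) eta Hs H2.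
    by exists E2; split => //; apply: sem_if_f.
-
  move=> e I p _ IH HA HW.
  have IH' := IH (fun v k h => HA v k (or_intror h))
     (fun e I p0 h => HW e I p0 (or_intror h)).
  set W := PWhile e I p.
  pose G eta := Good W (AAnd (ANot e) I) eta.
  have notG_e : forall eta, is_state N eta -> holds N eta I -> ~ G eta -> holds N eta e.
    move=> eta Hs HI HG; case He: (holds N eta e) => //; exfalso; apply: HG.
    exists (fun x => x = eta); split; first by constructor => //; rewrite He.
    by move=> x ->; rewrite /= He HI.
  have step : forall eta, is_state N eta -> holds N eta I -> ~ G eta ->
      exists eta', (exists E, sem N p eta E /\ E eta') /\
        is_state N eta' /\ holds N eta' I /\ ~ G eta'.
    move=> eta Hs HI HG; have He := notG_e _ Hs HI HG.
    have [E0 [S0 F0]] := IH' eta Hs (introT andP (conj He HI)).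
    apply: NNPP => Hn; apply: HG.
    have allG : forall x, E0 x -> G x.
      move=> x Hx; apply: NNPP => Hx'; apply: Hn; exists x.
      by have [? ?] := F0 x Hx; split; [exists E0|].
    pose Ef x := epsilon (inhabits (fun _ : V -> nat => False))
      (fun E => sem N W x E /\ forall y, E y -> holds N y (AAnd (ANot e) I) /\ is_state N y).
    have HEf : forall x, E0 x -> sem N W x (Ef x) /\
        forall y, Ef x y -> holds N y (AAnd (ANot e) I) /\ is_state N y.
      move=> x Hx; exact: (epsilon_spec (inhabits (fun _ : V -> nat => False)) _ (allG x Hx)).
    exists (fun y => exists2 x, E0 x & Ef x y); split.
      rewrite /W; apply: (@sem_while_t V M N e I p eta) => //; apply: (sem_seq (Ef := Ef)) => // x Hx; by case: (HEf x Hx).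
    by move=> y [x Hx Hy]; case: (HEf x Hx) => _; apply.
  move=> eta0 Hs0 HI0; apply: NNPP => HG0.
  pose X := {eta | is_state N eta /\ holds N eta I /\ ~ G eta}.
  pose f : X -> X := fun x =>
    let c := constructive_indefinite_description _
       (step (sval x) (proj1 (svalP x)) (proj1 (proj2 (svalP x))) (proj2 (proj2 (svalP x)))) in
    exist _ (sval c) (proj2 (svalP c)).
  have fP : forall x, exists E, sem N p (sval x) E /\ E (sval (f x)).
    move=> x; rewrite /f /=.
    set c := constructive_indefinite_description _ _.
    exact: (proj1 (svalP c)).
  pose x0 : X := exist _ eta0 (conj Hs0 (conj HI0 HG0)).
  apply: (HW e I p (or_introl erefl)).
  exists (fun i => sval (ssrnat.iter i f x0)) => i.
  have [Hs [HI HG]] := svalP (ssrnat.iter i f x0).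
  split => //; split; first exact: notG_e.
  exact: fP.
-
  move=> P Q Hv _ _ eta Hs HP.
  exists (fun x => x = eta); split; first by constructor.
  move=> x ->; split => //; have := Hv eta Hs; rewrite /= HP; by [].
Qed.
End S.

Theorem mainTheorem1 (V M : finType) (N : GRN V M)
    (P Q : assertion V M) (p : prog V M) :
  (* assignments v := k of the program stay in the domain [0, b_v] *)
  (forall v k, subprog (PAssign v k) p -> k <= bnd N v) ->
  (* every while loop of p terminates *)
  (forall e I p0, subprog (PWhile e I p0) p ->
     ~ exists s : nat -> V -> nat,
         forall i, is_state N (s i) /\ holds N (s i) e /\
                   exists E, sem N p0 (s i) E /\ E (s i.+1)) ->
  derivable N P p Q ->
  forall eta, is_state N eta -> holds N eta P ->
    exists E, sem N p eta E /\ forall eta', E eta' -> holds N eta' Q.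
Proof.
move=> HA HW HD eta Hs HP.
have [E [S F]] := main_gen HD HA HW Hs HP.
by exists E; split => // x /F [].
Qed.
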